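(* There is an absolute constant $C$ such that the following holds. Let $p$ be a real polynomial in $n$ variables of degree $d$ whose Hessian determinant $h_p(x)=\det(\nabla^2 p(x))$ is not identically zero. Then there is $a\in\mathbb{Z}^n$ with $\mathrm{bl}(a)\le C\, n\log(dn)$ such that $h_p(a)\neq0$.
   Context: For an integer $k$, $\mathrm{bl}(k)=\max\{1,\lceil\log_2|k|\rceil\}$; the bit length of an integer vector is the sum of the bit lengths of its entries. *)

(* Defs.v *)
From HB Require Import structures.
From mathcomp Require Import all_boot all_order all_algebra.
From mathcomp Require Import mpoly.
From mathcomp Require Import Rstruct.
From Stdlib Require Import Reals.
Set Implicit Arguments. Unset Strict Implicit. Unset Printing Implicit Defensive.
Import Order.TTheory GRing.Theory Num.Theory.
Local Open Scope ring_scope.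

(* bit length of an integer: bl(k) = max{1, ceil(log2 |k|)}.
   up_log 2 m is the least e with m <= 2^e, i.e. ceil(log2 m) for m >= 1. *)
Definition bl (k : int) : nat := maxn 1 (up_log 2 (absz k)).

Definition blvec (n : nat) (a : 'I_n -> int) : nat := (\sum_(i < n) bl (a i))%N.

Definition hessdet (n : nat) (p : {mpoly R[n]}) (x : 'I_n -> R) : R :=
  \det (\matrix_(i < n, j < n) (mderiv j (mderiv i p)).@[x]).

(* Main.v *)
Require Import Defs.
From HB Require Import structures.
From mathcomp Require Import all_boot all_order all_algebra.
From mathcomp Require Import mpoly.
From mathcomp Require Import Rstruct.
From Stdlib Require Import Reals.
From mathcomp Require Import zify.
From Stdlib Require Import Lia Lra Classical.
Import Order.TTheory GRing.Theory Num.Theory.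
Local Open Scope ring_scope.
Set Implicit Arguments. Unset Strict Implicit.

Definition linepoly n (q : {mpoly R[n]}) (x : 'I_n -> R) (t : 'I_n) : {poly R} :=
  mmap (@polyC R) (fun i => if i == t then 'X else (x i)%:P) q.

Lemma linepolyE n (q : {mpoly R[n]}) x t c :
  (linepoly q x t).[c] = q.@[fun i => if i == t then c else x i].
Proof.
rewrite /linepoly /mmap mevalE horner_sum; apply: eq_bigr => m _.
rewrite hornerCM /mmap1 horner_prod; congr (_ * _); apply: eq_bigr => i _.
by rewrite horner_exp; case: eqP => _; rewrite ?hornerX ?hornerC.
Qed.

Lemma linepoly_size n (q : {mpoly R[n]}) x t :
  (size (linepoly q x t) <= msize q)%nat.
Proof.
rewrite /linepoly /mmap; apply: (leq_trans (size_sum _ _ _)).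
apply/bigmax_leqP_seq => m hm _.
rewrite /mmap1 (bigD1 t) //= eqxx.
have -> : \prod_(i < n | i != t) (if i == t then 'X else (x i)%:P) ^+ m i
        = (\prod_(i < n | i != t) (x i) ^+ m i)%:P.
  rewrite rmorph_prod; apply: eq_bigr => i /negbTE ->; by rewrite rmorphXn.
rewrite mulrCA mulrC -polyCM mul_polyC.
apply: (leq_trans (size_scale_leq _ _)).
rewrite size_polyXn.
apply: leq_trans (msize_mdeg_lt hm).
by rewrite ltnS mdegE (bigD1 t) //= leq_addr.
Qed.

Lemma poly_grid0 (p : {poly R}) k :
  (size p <= k.+1)%nat -> (forall j, (j <= k)%nat -> p.[j%:R] = 0) -> p = 0.
Proof.
move=> sp hp; apply/eqP; apply: contraT => pn0.
have := @max_poly_roots _ p [seq (j%:R : R) | j <- iota 0 k.+1] pn0.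
rewrite size_map size_iota.
have -> : all (root p) [seq (j%:R : R) | j <- iota 0 k.+1].
  apply/allP => c /mapP [j]; rewrite mem_iota add0n ltnS => /andP [_ hj] ->.
  by apply/rootP; apply: hp.
rewrite map_inj_uniq ?iota_uniq; last by move=> a b /eqP; rewrite eqr_nat => /eqP.
by move=> /(_ isT isT); rewrite ltnNge sp.
Qed.

Lemma grid_vanish n (q : {mpoly R[n]}) k :
  (msize q <= k.+1)%nat ->
  (forall b : 'I_n -> 'I_k.+1, q.@[fun i => ((b i : nat)%:R : R)] = 0) ->
  forall x, q.@[x] = 0.
Proof.
move=> sq hb.
have T : forall t, (t <= n)%nat -> forall x : 'I_n -> R,
    (forall i : 'I_n, (t <= i)%nat -> [exists j : 'I_k.+1, x i == (j : nat)%:R]) ->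
    q.@[x] = 0.
  elim => [|t IH] tn x Hx.
    pose b i := xchoose (existsP (Hx i (leq0n _))).
    rewrite -(hb b); apply: meval_eq => i.
    by apply/eqP; exact: (xchooseP (existsP (Hx i (leq0n _)))).
  pose ti : 'I_n := Ordinal tn.
  have P0 : linepoly q x ti = 0.
    apply: (poly_grid0 (leq_trans (linepoly_size _ _ _) sq)) => j hj.
    rewrite linepolyE; apply: IH; first exact: ltnW.
    move=> i hi; case: eqP => [_|/eqP ne].
      by apply/existsP; exists (Ordinal (hj : (j < k.+1)%nat)).
    apply: Hx; rewrite ltn_neqAle hi andbT.
    by apply: contra ne => /eqP e; apply/eqP/val_inj.
  have := linepolyE q x ti (x ti); rewrite P0 horner0 => ->.
  by apply: meval_eq => i; case: eqP => [->|].
move=> x; apply: (T n (leqnn n)) => i; by rewrite leqNgt ltn_ord.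
Qed.

Lemma msize_mderiv n (p : {mpoly R[n]}) i :
  (msize (mderiv i p) <= (msize p).-1)%nat.
Proof.
rewrite [msize (mderiv i p)]msizeE; apply/bigmax_leqP_seq => m hm _.
have : (m + U_(i))%MM \in msupp p.
  move: hm; rewrite !mcoeff_msupp mcoeff_mderiv.
  by apply: contra => /eqP ->; rewrite mul0rn.
move/msize_mdeg_lt; rewrite mdegD mdeg1 addn1.
by case: (msize p).
Qed.

Lemma arith1 a b x e : (a <= x.+1)%nat -> (b <= e.+1)%nat -> ((a + b).-1 <= (e + x).+1)%nat.
Proof. lia. Qed.

Lemma msize_prod n m (F : 'I_m -> {mpoly R[n]}) e :
  (forall i, msize (F i) <= e.+1)%nat -> (msize (\prod_i F i) <= (m * e).+1)%nat.
Proof.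
elim: m F => [|m IH] F hF; first by rewrite big_ord0 msize1.
rewrite big_ord_recr /=.
have [->|nz1] := eqVneq (\prod_(i < m) F (widen_ord (leqnSn m) i)) 0.
  by rewrite mul0r msize0.
have [->|nz2] := eqVneq (F ord_max) 0; first by rewrite mulr0 msize0.
rewrite msizeM //.
have h1 := IH (fun i => F (widen_ord (leqnSn m) i)) (fun i => hF _).
have h2 := hF ord_max.
rewrite mulSn; exact: (arith1 h1 h2).
Qed.

Lemma msize_det n m (A : 'M[{mpoly R[n]}]_m) e :
  (forall i j, msize (A i j) <= e.+1)%nat -> (msize (\det A) <= (m * e).+1)%nat.
Proof.
move=> hA; rewrite /determinant; apply: leq_trans (msize_sum _ _ _) _.
apply/bigmax_leqP => s _.
rewrite -signr_odd; case: (odd _); rewrite ?expr1 ?expr0 ?mulN1r ?mul1r ?msizeN;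
  exact: msize_prod.
Qed.

Definition hessmp n (p : {mpoly R[n]}) : {mpoly R[n]} :=
  \det (\matrix_(i < n, j < n) (mderiv j (mderiv i p))).

Lemma hessmpE n (p : {mpoly R[n]}) x : hessdet p x = (hessmp p).@[x].
Proof.
rewrite /hessdet /hessmp -det_map_mx; congr (determinant _); apply/matrixP => i j.
by rewrite !mxE.
Qed.

Lemma hessmp_size n d (p : {mpoly R[n]}) :
  msize p = d.+1 -> (msize (hessmp p) <= (n * d).+1)%nat.
Proof.
move=> sp; apply: msize_det => i j; rewrite mxE.
apply: leq_trans (msize_mderiv _ _) _; apply: leq_trans (leq_pred _) _.
apply: leq_trans (msize_mderiv _ _) _; rewrite sp /=; exact: leqnSn.
Qed.

Lemma hessmp_small n d (p : {mpoly R[n.+1]}) :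
  msize p = d.+1 -> (d <= 1)%nat -> hessmp p = 0.
Proof.
move=> sp hd; rewrite /hessmp.
have -> : (\matrix_(i < n.+1, j < n.+1) mderiv j (mderiv i p)) = 0.
  apply/matrixP => i j; rewrite !mxE; apply/eqP; rewrite -msize_poly_eq0 -leqn0.
  apply: leq_trans (msize_mderiv _ _) _.
  have h := msize_mderiv p i; rewrite sp /= in h; move: h hd; lia.
by rewrite det0.
Qed.

Lemma INR_expn a b : INR (expn a b) = (INR a ^ b)%R.
Proof.
elim: b => [|b IH]; first by rewrite expn0.
by rewrite expnS -multE mult_INR IH.
Qed.

Lemma real_bound N : (2 <= N)%nat ->
  (INR (maxn 1 (up_log 2 N)) <= 4 * ln (INR N))%R.
Proof.
move=> hN.
have e1 : (0 < up_log 2 N)%nat by rewrite up_log_gt0.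
have hlt := up_log_gtn (isT : (1 < 2)%nat) hN.
rewrite (maxn_idPr e1).
set e := up_log 2 N in e1 hlt *.
have Ha : INR e = (INR e.-1 + 1)%R by rewrite -S_INR prednK.
have H0 : (0 <= INR e.-1)%R by apply: pos_INR.
have Hl2 := ln_lt_2.
have H1 : (INR e.-1 * ln 2 < ln (INR N))%R.
  rewrite -ln_pow; last lra.
  apply: ln_increasing; first by apply: pow_lt; lra.
  have -> : 2%R = INR 2 by rewrite /=; lra.
  by rewrite -INR_expn; apply: lt_INR; apply/ssrnat.ltP.
have H2 : (ln 2 <= ln (INR N))%R.
  have : (2 <= INR N)%R.
    have -> : 2%R = INR 2 by rewrite /=; lra.
    by apply: le_INR; apply/ssrnat.leP.
  case/Rle_lt_or_eq_dec => h; first by apply: Rlt_le; apply: ln_increasing => //; lra.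
  by rewrite -h; lra.
rewrite Ha; nra.
Qed.

Theorem corollary4p6 :
  exists C : R,
    forall (n d : nat) (p : {mpoly R[n]}),
      msize p = d.+1 ->
      (exists x : 'I_n -> R, hessdet p x != 0) ->
      exists a : 'I_n -> int,
        ((blvec a)%:R <= C * n%:R * ln ((d * n)%:R)) /\
        hessdet p (fun i => (a i)%:~R) != 0.
Proof.
exists 4%:R => n d p sp [x hx].
case: n p sp x hx => [|n] p sp x hx.
  exists (fun _ => 0%:Z); split; first by rewrite /blvec big_ord0 mulr0 mul0r.
  by rewrite /hessdet det_mx00 oner_neq0.
have d2 : (1 < d)%nat.
  rewrite ltnNge; apply/negP => hd.
  by move: hx; rewrite hessmpE (hessmp_small sp hd) meval0 eqxx.
set k := (n.+1 * d)%nat.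
have [b hb] : exists b : 'I_n.+1 -> 'I_k.+1,
    (hessmp p).@[fun i => ((b i : nat)%:R : R)] != 0.
  apply: NNPP => nb.
  have := grid_vanish (hessmp_size sp) _ x; rewrite -hessmpE => h.
  move: hx; rewrite h ?eqxx // => b; apply/eqP; apply: contraT => hb'.
  by exfalso; apply: nb; exists b.
exists (fun i => Posz (b i)); split; last first.
  by rewrite hessmpE.
have hB : (blvec (fun i => Posz (b i)) <= n.+1 * maxn 1 (up_log 2 (d * n.+1)))%nat.
  rewrite /blvec -[n.+1 in X in (_ <= X * _)%nat]card_ord -sum_nat_const.
  apply: leq_sum => i _; rewrite /bl /= geq_max leq_maxl /=.
  apply: leq_trans (leq_maxr 1 _); apply: leq_up_log.
  by rewrite mulnC -ltnS ltn_ord.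
apply: le_trans (_ : (n.+1 * maxn 1 (up_log 2 (d * n.+1)))%:R <= _).
  by rewrite ler_nat.
rewrite natrM mulrC -mulrA [_ * ln _]mulrC mulrA.
apply: ler_wpM2r; first by rewrite ler0n.
have := real_bound (_ : (2 <= d * n.+1)%nat).
have -> : (4%:R : R) = 4%R by rewrite -INRE /=; lra.
rewrite !INRE => h; apply/RleP; apply: h.
by rewrite -[2%nat]muln1 leq_mul.
Qed.
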